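(* Let $\Omega\subset\mathbb{R}^3$ be a bounded domain with $C^2$ boundary satisfying the uniform circumscribed sphere condition with radius $R$. Then $$|x-q^+(x,v)|\lesssim R\,N(x,v)$$ for all $v\in\mathbb{R}^3\setminus\{0\}$ and all $x\in\Gamma^-_v:=\{x\in\partial\Omega: n(x)\cdot v<0\}$, with an absolute implicit constant.
   Context: $n(x)$ is the outward unit normal at $x\in\partial\Omega$. $N(x,v)=-n(q(x,v))\cdot\frac{v}{|v|}$, where $q(x,v)=x-\tau_{x,v}v$ is the backward exit point; for $x\in\partial\Omega$ with $n(x)\cdot v<0$ this gives $q(x,v)=x$ and $N(x,v)=-n(x)\cdot v/|v|$. $q^+(x,v)$ denotes the point where the ray $\{x+sv:s>0\}$ leaves $\Omega$, i.e. the other endpoint of the chord of $\bar\Omega$ through $x$ in direction $v$. Uniform circumscribed sphere condition with radius $R$: every $x\in\partial\Omega$ lies on $\partial B_R$ for some ball $B_R$ of radius $R$ with $\bar\Omega\subset\bar B_R$. *)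

(* Defs.v *)
(* R^3 is 'rV[R]_3 (its library topology is the
   sup-norm one, which coincides with the Euclidean topology); Euclidean
   inner product and norm are defined explicitly below. *)
From HB Require Import structures.
From mathcomp Require Import all_boot all_order all_algebra.
From mathcomp Require Import all_classical all_reals all_analysis.
Set Implicit Arguments. Unset Strict Implicit. Unset Printing Implicit Defensive.
Import Order.TTheory GRing.Theory Num.Theory.
Import numFieldNormedType.Exports.
Local Open Scope classical_set_scope.
Local Open Scope ring_scope.

Section Defs.
Variable R : realType.
Local Notation V := 'rV[R]_3.

Definition edot (u w : V) : R := \sum_(i < 3) u 0 i * w 0 i.
Definition enorm (u : V) : R := Num.sqrt (edot u u).

Definition ebasis (i : 'I_3) : V := delta_mx 0 i.

Definition grad (f : V -> R) (x : V) : V := \row_(i < 3) ('d f x (ebasis i)).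

Definition C2 (f : V -> R) : Prop :=
  (forall x, differentiable f x) /\
  (forall i x, differentiable (fun y => 'd f y (ebasis i)) x) /\
  (forall i j, continuous (fun y => 'd (fun z => 'd f z (ebasis i)) y (ebasis j))).

Definition bdry (O : set V) : set V := closure O `\` O.

Definition bounded_domain (O : set V) : Prop :=
  open O /\ connected O /\ O !=set0 /\ exists M : R, forall y, O y -> enorm y <= M.

Definition C2_defining (O : set V) (xi : V -> R) : Prop :=
  C2 xi /\ O = [set y | xi y < 0] /\ (forall y, bdry O y -> grad xi y != 0).

Definition normal (xi : V -> R) (x : V) : V := (enorm (grad xi x))^-1 *: grad xi x.

Definition Nfun (xi : V -> R) (x v : V) : R := - (edot (normal xi x) v / enorm v).

(* forward exit point q^+(x,v) of the ray {x + s v : s > 0} from O *)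
Definition tplus (O : set V) (x v : V) : R :=
  sup [set s : R | 0 <= s /\ forall t : R, 0 < t < s -> O (x + t *: v)].
Definition qplus (O : set V) (x v : V) : V := x + tplus O x v *: v.

Definition circumscribed (O : set V) (Rad : R) : Prop :=
  forall x, bdry O x -> exists c : V,
    enorm (x - c) = Rad /\ forall y, closure O y -> enorm (y - c) <= Rad.

End Defs.

(* Main.v *)
Require Import Defs.
From HB Require Import structures.
From mathcomp Require Import all_boot all_order all_algebra.
From mathcomp Require Import all_classical all_reals all_analysis.
From mathcomp Require Import ring lra.
Import Order.TTheory GRing.Theory Num.Theory.
Import numFieldNormedType.Exports.
Local Open Scope classical_set_scope.
Local Open Scope ring_scope.

Section E.
Variable R : realType.
Implicit Types u w g : 'rV[R]_3.

Lemma edotE u w : edot u w = u 0 (@Ordinal 3 0 isT) * w 0 (@Ordinal 3 0 isT) + u 0 (@Ordinal 3 1 isT) * w 0 (@Ordinal 3 1 isT) + u 0 (@Ordinal 3 2 isT) * w 0 (@Ordinal 3 2 isT).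
Proof. rewrite /edot !big_ord_recr big_ord0 /= add0r.
by congr (_ * _ + _ * _ + _ * _); congr (_ _ _); apply/val_inj. Qed.

Lemma edotC u w : edot u w = edot w u.
Proof. rewrite !edotE; ring. Qed.
Lemma edotDl u w g : edot (u + w) g = edot u g + edot w g.
Proof. rewrite !edotE !mxE; ring. Qed.
Lemma edotZl (a : R) u w : edot (a *: u) w = a * edot u w.
Proof. rewrite !edotE !mxE; ring. Qed.
Lemma edotNl u w : edot (- u) w = - edot u w.
Proof. rewrite !edotE !mxE; ring. Qed.
Lemma edotBl u w g : edot (u - w) g = edot u g - edot w g.
Proof. by rewrite edotDl edotNl. Qed.
Lemma edotDr u w g : edot g (u + w) = edot g u + edot g w.
Proof. by rewrite edotC edotDl !(edotC g). Qed.
Lemma edotZr (a : R) u w : edot w (a *: u) = a * edot w u.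
Proof. by rewrite edotC edotZl edotC. Qed.
Lemma edotNr u w : edot w (- u) = - edot w u.
Proof. by rewrite edotC edotNl edotC. Qed.
Lemma edot_ge0 u : 0 <= edot u u.
Proof. rewrite edotE; nra. Qed.
Lemma edot_eq0 u : edot u u = 0 -> u = 0.
Proof.
rewrite edotE => h.
have h0 : u 0 (@Ordinal 3 0 isT) = 0 by nra.
have h1 : u 0 (@Ordinal 3 1 isT) = 0 by nra.
have h2 : u 0 (@Ordinal 3 2 isT) = 0 by nra.
apply/rowP => i; rewrite mxE.
case: i => [[|[|[|k]]] Hk] //.
- by rewrite (_ : Ordinal Hk = Ordinal (isT : 0 < 3)%N) //; apply/val_inj.
- by rewrite (_ : Ordinal Hk = Ordinal (isT : 1 < 3)%N) //; apply/val_inj.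
- by rewrite (_ : Ordinal Hk = Ordinal (isT : 2 < 3)%N) //; apply/val_inj.
Qed.
Lemma enormZ (a : R) u : enorm (a *: u) = `|a| * enorm u.
Proof. by rewrite /enorm edotZl edotZr mulrA -expr2 sqrtrM ?sqr_ge0 // sqrtr_sqr. Qed.
Lemma enorm_sq u : enorm u ^+ 2 = edot u u.
Proof. by rewrite /enorm sqr_sqrtr // edot_ge0. Qed.
Lemma enorm_ge0 u : 0 <= enorm u.
Proof. exact: sqrtr_ge0. Qed.

Lemma parallel g u : u != 0 ->
  (forall w, 0 < edot w u -> 0 <= edot g w) ->
  g = (edot g u / edot u u) *: u.
Proof.
move=> u0 H.
have uu : 0 < edot u u.
  rewrite lt_def edot_ge0 andbT; apply/eqP => /edot_eq0 /eqP; exact/negP.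
have gu : 0 <= edot g u by apply: H.
set l := edot g u / edot u u.
set p := g - l *: u.
have pu : edot p u = 0.
  by rewrite /p edotBl edotZl /l divfK ?subrr // gt_eqF.
have gp : edot g p = edot p p.
  have -> : g = p + l *: u by rewrite /p subrK.
  by rewrite edotDl edotZl (edotC u p) pu mulr0 addr0.
suff : edot p p = 0 by move/edot_eq0/eqP; rewrite /p subr_eq0 => /eqP.
apply/eqP; rewrite eq_le edot_ge0 andbT; rewrite leNgt; apply/negP => pp.
set e := edot p p / (2 * edot g u + 1).
have e0 : 0 < e by rewrite /e divr_gt0 //; lra.
have := H (- p + e *: u).
rewrite edotDl edotNl edotZl pu oppr0 add0r => /(_ (mulr_gt0 e0 uu)).
rewrite edotDr edotNr edotZr gp.
have : e * edot g u < edot p p.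
  rewrite /e mulrC mulrA ltr_pdivrMr; last lra.
  nra.
lra.
Qed.
Lemma dir_nonneg (f : 'rV[R]_3 -> R) (a w : 'rV[R]_3) :
  differentiable f a -> (forall t : R, 0 < t -> f a <= f (a + t *: w)) ->
  0 <= 'd f a w.
Proof.
move=> df H.
rewrite -deriveE //.
have cv := @diff_derivable _ _ _ f a w df.
rewrite /derive (cvg_at_rightE _ _ cv).
apply: limr_ge.
  apply/cvg_ex; exists (lim ((fun h : R => h^-1 *: ((f \o shift a) (h *: w) - f a)) @ 0^')).
  move=> A /cv /nbhs_ballP [_ /posnumP[e] xe_A].
  by exists e%:num => //= y xe_y; rewrite lt_def => /andP [xney _]; apply: xe_A.
near=> h.
have hp : 0 < h by near: h; exact: nbhs_right_gt.
rewrite /=; apply: mulr_ge0; first by rewrite invr_ge0 ltW.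
rewrite subr_ge0 addrC; exact: H.
Unshelve. all: by end_near.
Qed.

Lemma grad_dot (f : 'rV[R]_3 -> R) (a w : 'rV[R]_3) :
  edot (grad f a) w = 'd f a w.
Proof.
rewrite /edot /grad {2}(row_sum_delta w) linear_sum /=.
apply: eq_bigr => i _; rewrite linearZ /= mxE mulrC.
by rewrite /ebasis.
Qed.
End E.
Arguments edotE {R}.
Arguments edotC {R}.
Arguments edotDl {R}.
Arguments edotZl {R}.
Arguments edotNl {R}.
Arguments edotBl {R}.
Arguments edotDr {R}.
Arguments edotZr {R}.
Arguments edotNr {R}.
Arguments edot_ge0 {R}.
Arguments edot_eq0 {R}.
Arguments enormZ {R}.
Arguments enorm_sq {R}.
Arguments enorm_ge0 {R}.
Arguments parallel {R}.
Arguments dir_nonneg {R}.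
Arguments grad_dot {R}.

Theorem proposition2p7 :
  exists C : nat, (0 < C)%N /\
  forall (R : realType) (O : set 'rV[R]_3) (xi : 'rV[R]_3 -> R) (Rad : R),
    bounded_domain O -> C2_defining O xi -> 0 < Rad -> circumscribed O Rad ->
    forall (v x : 'rV[R]_3), v != 0 ->
      bdry O x -> edot (normal xi x) v < 0 ->
      enorm (x - qplus O x v) <= C%:R * Rad * Nfun xi x v.
Proof.
exists 2%N; split => //.
move=> R O xi Rad _ [[dxi _] [Oe gne]] Rad0 circ v x v0 bx nv.
have [c [xc Hc]] := circ x bx.
have gx0 := gne x bx.
case: bx => clx nOx.
set u := x - c.
have uE : u = x - c by [].
clearbody u.
have uu : edot u u = Rad ^+ 2 by rewrite uE -enorm_sq xc.
have inball : forall y, closure O y -> edot (y - c) (y - c) <= Rad ^+ 2.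
  move=> y /Hc; rewrite -enorm_sq => h.
  by rewrite lerXn2r // ?nnegrE ?enorm_ge0 // ltW.
have xi_out : forall y, ~ O y -> 0 <= xi y.
  by move=> y; rewrite Oe /= => /negP; rewrite -leNgt.
have xix : xi x <= 0.
  rewrite leNgt; apply/negP => xpos.
  have := differentiable_continuous (dxi x).
  move=> /cvgr_gt /(_ _ xpos) nb.
  have [y [Oy /= yp]] := clx _ nb.
  by move: Oy; rewrite Oe /= => /lt_trans /(_ yp); rewrite ltxx.
set g := grad xi x.
have gdir : forall w, 0 < edot w u -> 0 <= edot g w.
  move=> w wu; rewrite /g grad_dot; apply: dir_nonneg => // t t0.
  apply: (le_trans xix); apply: xi_out => Oy.
  have := inball _ (subset_closure Oy).
  have -> : x + t *: w - c = u + t *: w by rewrite uE addrAC.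
  rewrite !(edotDl, edotDr, edotZl, edotZr) (edotC u w) uu.
  have := edot_ge0 w; nra.
have u0 : u != 0.
  apply/eqP => u0; move: uu; rewrite u0 /edot big1 => [/esym/eqP|i _]; last by rewrite mxE mul0r.
  by rewrite expf_eq0 /= gt_eqF.
have gpar := parallel g u u0 gdir.
set l := edot g u / edot u u in gpar.
have l0 : 0 < l.
  have uup : 0 < edot u u by rewrite uu exprn_gt0.
  have lge : 0 <= l by rewrite /l divr_ge0 ?edot_ge0 ?gdir.
  rewrite lt_def lge andbT.
  by apply/eqP => l0; move: gx0; rewrite -/g gpar l0 scale0r eqxx.
have nu : enorm u = Rad by rewrite uE.
have nE : normal xi x = Rad^-1 *: u.
  rewrite /normal -/g gpar enormZ nu gtr0_norm // scalerA; congr (_ *: _).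
  by rewrite invfM mulrAC mulVf ?mul1r // gt_eqF.
rewrite nE edotZl in nv.
have uv : edot u v < 0.
  by move: nv; rewrite pmulr_rlt0 // invr_gt0.
have vv : 0 < edot v v.
  rewrite lt_def edot_ge0 andbT; apply/eqP => /edot_eq0 /eqP; exact/negP.
have nv0 : 0 < enorm v by rewrite /enorm sqrtr_gt0.
set L := - (2 * edot u v) / edot v v.
have L0 : 0 < L by rewrite /L divr_gt0 //; lra.
set S := [set s : R | 0 <= s /\ forall t : R, 0 < t < s -> O (x + t *: v)].
have S0 : S 0 by split => // t; lra.
have SL : ubound S L.
  move=> s [s0 Hs]; rewrite leNgt; apply/negP => Ls.
  set t := (L + s) / 2.
  have tts : 0 < t < s by apply/andP; split; rewrite /t; lra.
  have := inball _ (subset_closure (Hs t tts)).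
  have -> : x + t *: v - c = u + t *: v by rewrite uE addrAC.
  rewrite !(edotDl, edotDr, edotZl, edotZr) (edotC v u) uu.
  have : L < t by rewrite /t; lra.
  rewrite /L ltr_pdivrMr // => h1 h2.
  have t0 : 0 < t by rewrite /t; lra.
  have h3 : t * (2 * edot u v + t * edot v v) <= 0 by lra.
  move: h3; rewrite pmulr_rle0 //; lra.
have tpL : tplus O x v <= L by apply: ge_sup => //; exists 0.
have tp0 : 0 <= tplus O x v.
  by apply: sup_upper_bound => //; split; [exists 0 | exists L].
rewrite /qplus opprD addrA subrr add0r -scaleNr enormZ normrN ger0_norm //.
rewrite /Nfun nE edotZl.
apply: (le_trans (ler_wpM2r (enorm_ge0 v) tpL)).
rewrite /L.
have ev : enorm v ^+ 2 = edot v v by rewrite enorm_sq.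
rewrite -ev.
rewrite [X in X <= _](_ : _ = 2 * Rad * - (Rad^-1 * edot u v / enorm v)) //.
have Rn : Rad != 0 by rewrite gt_eqF.
have vn : enorm v != 0 by rewrite gt_eqF.
by field; apply/andP; split.
Qed.
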